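(* Let $n\ge0$ and let $a\preccurlyeq b$ be vertices of $\square^n$ (i.e. subsets $a\subseteq b\subseteq\{1,\dots,n\}$). There is an isomorphism of preordered sets $\mathfrak{C}^{\square}_{path}(\square^n)(a,b)\to\Sigma_{b\setminus a}$, where $\Sigma_{b\setminus a}$ carries the weak Bruhat order $\leadsto_B$, and these isomorphisms are compatible with concatenation (for $a\preccurlyeq b\preccurlyeq c$, concatenation of paths corresponds to concatenation of sequences $\Sigma_{b\setminus a}\times\Sigma_{c\setminus b}\to\Sigma_{c\setminus a}$). Consequently the preorder $\leadsto$ on $\mathfrak{C}^{\square}_{path}(\square^n)(a,b)$ is a partial order, isomorphic to the weak Bruhat order.
   Context: Cubical sets: presheaves on the category $\square$ with objects $[1]^n$ and morphisms generated by faces $\partial_{i,\epsilon}$ (insert $\epsilon$ at coordinate $i$), degeneracies (delete a coordinate) and negative connections ($(x_i,x_{i+1})\mapsto\max(x_i,x_{i+1})$); $\square^n$ is representable, and its vertices are identified with subsets of $\{1,\dots,n\}$ ordered by inclusion $\preccurlyeq$. Paths: $I_m$ is $m$ copies of $\square^1$ glued end to start, with distinguished initial/terminal vertices. For $0\le k\le m-2$, $\mathbb{I}_{k,m}$ is $I_k$, $\square^2$, $I_{m-2-k}$ glued end to start (through the vertices $\emptyset$ and $\{1,2\}$ of $\square^2$); $s_{k,m},t_{k,m}:I_m\to\mathbb{I}_{k,m}$ are the identity on the first $k$ and last $m-2-k$ edges and send edges $k+1,k+2$ to $\emptyset\to\{2\}\to\{1,2\}$ (for $s$), resp. $\emptyset\to\{1\}\to\{1,2\}$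 (for $t$). For a cubical set $S$ with vertices $a,b$, $\mathfrak{C}^{\square}_{path}(S)(a,b)$ is the set of maps $\gamma:I_m\to S$ (any $m$) sending the initial vertex to $a$ and the terminal to $b$, modulo the equivalence relation generated by $\gamma\sim\gamma'$ when $\gamma=\gamma'\circ h$ for an endpoint-preserving $h:I_m\to I_{m'}$, preordered by the reflexive-transitive closure $\leadsto$ of $[F\circ s_{k,m}]\leadsto[F\circ t_{k,m}]$ for endpoint-preserving $F:\mathbb{I}_{k,m}\to S$. Composition is concatenation of paths. For a finite totally ordered set $A$ (here with order induced from $\{1,\dots,n\}$), $\Sigma_A$ is the set of sequences $(x_1,\dots,x_k)$ enumerating $A$ without repetition; the weak Bruhat order $\leadsto_B$ is the partial order generated by $(x_1,\dots,x_i,x_{i+1},\dots,x_k)\leadsto_B(x_1,\dots,x_{i+1},x_i,\dots,x_k)$ whenever $x_i>x_{i+1}$. *)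

(* Defs.v *)
From mathcomp Require Import all_boot.
From Stdlib Require Import Relations.
Set Implicit Arguments. Unset Strict Implicit. Unset Printing Implicit Defensive.

(** * The box category (faces, degeneracies, negative connections)
    Objects [1]^n are represented by their vertex sets [cube n]
    (coordinates are 0-indexed: coordinate i of the paper is index i-1);
    morphisms [1]^m -> [1]^n are the maps cube m -> cube n generated under
    composition by the three kinds of generators below. *)
Definition cube (n : nat) := {ffun 'I_n -> bool}.

Definition face (n : nat) (i : 'I_n.+1) (e : bool) (x : cube n) : cube n.+1 :=
  [ffun j : 'I_n.+1 => if unlift i j is Some k then x k else e].

Definition degen (n : nat) (i : 'I_n.+1) (x : cube n.+1) : cube n :=
  [ffun k : 'I_n => x (lift i k)].

Definition conn (n : nat) (i : 'I_n.+1) (x : cube n.+2) : cube n.+1 :=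
  [ffun j : 'I_n.+1 => if j == i then x (inord i) || x (inord i.+1)
                       else x (lift (inord i.+1) j)].

Inductive boxmap : forall m n : nat, (cube m -> cube n) -> Prop :=
| bm_id n : @boxmap n n (fun x => x)
| bm_face m n (i : 'I_n.+1) e f :
    @boxmap m n f -> @boxmap m n.+1 (fun x => face i e (f x))
| bm_degen m n (i : 'I_n.+1) f :
    @boxmap m n.+1 f -> @boxmap m n (fun x => degen i (f x))
| bm_conn m n (i : 'I_n.+1) f :
    @boxmap m n.+2 f -> @boxmap m n.+1 (fun x => conn i (f x)).

(** * The representable cubical set box^n.
    Its k-cubes are the boxmaps cube k -> cube n.  Vertices are identified
    with subsets of {1..n} (here of 'I_n). *)
Definition vset (n : nat) (A : {set 'I_n}) : cube n := [ffun j => j \in A].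

Definition edge (n : nat) := cube 1 -> cube n.
Definition esrc n (e : edge n) : cube n := e [ffun => false].
Definition etgt n (e : edge n) : cube n := e [ffun => true].

(** A map I_m -> box^n is a sequence of m edges (1-cubes) glued end to
    start; [is_cpath u p v] says that p is such a map with initial vertex u
    and terminal vertex v. *)
Fixpoint is_cpath n (u : cube n) (p : seq (edge n)) (v : cube n) : Prop :=
  match p with
  | [::] => u = v
  | e :: p' => boxmap e /\ esrc e = u /\ is_cpath (etgt e) p' v
  end.

(** Precomposition with an endpoint-preserving map h : I_m -> I_m'.
    Such an h is a sequence of m edges of I_m', each either the next
    nondegenerate edge (true) or a degenerate edge at the current vertex
    (false), using exactly m' nondegenerate edges. [reparam u h q] is q o h,
    where u is the initial vertex of q. *)
Fixpoint reparam n (u : cube n) (h : seq bool) (q : seq (edge n)) : seq (edge n) :=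
  match h with
  | [::] => [::]
  | true :: h' =>
      match q with
      | e :: q' => e :: reparam (etgt e) h' q'
      | [::] => [::]
      end
  | false :: h' => (fun _ => u) :: reparam u h' q
  end.

Definition reparam_rel n (a b : {set 'I_n}) (p q : seq (edge n)) : Prop :=
  is_cpath (vset a) p (vset b) /\ is_cpath (vset a) q (vset b) /\
  exists h : seq bool, count id h = size q /\ p = reparam (vset a) h q.

Definition path_equiv n (a b : {set 'I_n}) : relation (seq (edge n)) :=
  clos_refl_sym_trans _ (@reparam_rel n a b).

(** [F o s_{k,m}] ~> [F o t_{k,m}] for endpoint-preserving F : II_{k,m} -> box^n.
    F consists of k edges, a 2-cube sq, and m-2-k edges, glued through the
    vertices emptyset and {1,2} of box^2. The edges of s are
    emptyset -> {2} -> {1,2}, of t are emptyset -> {1} -> {1,2}. *)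
Definition zero2 : cube 2 := [ffun => false].
Definition one2 : cube 2 := [ffun => true].

Definition elem_step n (a b : {set 'I_n}) (p q : seq (edge n)) : Prop :=
  exists (pre post : seq (edge n)) (sq : cube 2 -> cube n) (u w : cube n),
    is_cpath (vset a) pre u /\ boxmap sq /\ sq zero2 = u /\ sq one2 = w /\
    is_cpath w post (vset b) /\
    p = pre ++ [:: (fun x => sq (face ord0 false x));
                   (fun x => sq (face ord_max true x))] ++ post /\
    q = pre ++ [:: (fun x => sq (face ord_max false x));
                   (fun x => sq (face ord0 true x))] ++ post.

(* the preorder on the quotient, lifted to representatives *)
Definition leads n (a b : {set 'I_n}) : relation (seq (edge n)) :=
  clos_refl_trans _ (fun p q => path_equiv a b p q \/
    exists p0 q0, path_equiv a b p p0 /\ elem_step a b p0 q0 /\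
                  path_equiv a b q0 q).

Definition sigma n (A : {set 'I_n}) (s : seq 'I_n) : Prop :=
  uniq s /\ [set x in s] = A.

Definition bruhat_step n (s t : seq 'I_n) : Prop :=
  exists (s1 s2 : seq 'I_n) (x y : 'I_n),
    (y < x)%N /\ s = s1 ++ x :: y :: s2 /\ t = s1 ++ y :: x :: s2.

Definition bruhat n : relation (seq 'I_n) := clos_refl_trans _ (@bruhat_step n).

(* Main.v *)
Require Import Defs.
From mathcomp Require Import all_boot zify.
From Stdlib Require Import Relations FunctionalExtensionality.
Set Implicit Arguments. Unset Strict Implicit. Unset Printing Implicit Defensive.

Definition goodf m n (f : cube m -> cube n) :=
 exists (c : 'I_n -> bool) (s : 'I_m -> option 'I_n),
 (forall (i j : 'I_m) (k l : 'I_n), (i < j)%N -> s i = Some k -> s j = Some l -> (k <= l)%N) /\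
 (forall x k, f x k = c k || [exists i, (s i == Some k) && x i]).

Definition mrg n (i : 'I_n.+1) (l : 'I_n.+2) : 'I_n.+1 :=
  inord (if (l <= i)%N then val l else (val l).-1).

Lemma mrg_val n (i : 'I_n.+1) (l : 'I_n.+2) :
  val (mrg i l) = (if (l <= i)%N then val l else (val l).-1).
Proof.
rewrite /mrg; apply: inordK. case: i l => [i Hi] [l Hl] /=. case: ifP => /= H; lia.
Qed.

Lemma mrg_eq n (i : 'I_n.+1) (l : 'I_n.+2) (j : 'I_n.+1) :
  (mrg i l == j) = if j == i then (l == inord i) || (l == inord i.+1)
                   else (l == lift (inord i.+1) j).
Proof.
rewrite -!val_eqE /= mrg_val /bump !inordK; last by case: i => /= i Hi; lia.
2: by case: i => /= i Hi; lia.
case: i l j => [i Hi] [l Hl] [j Hj] /=.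
case: (ltngtP j i) => H /=; case: ifP => H2; try (apply/eqP/eqP; lia).
- apply/eqP/orP => [H3|[] /eqP]; [|lia|lia].
  by case: (ltngtP l i) => H4; [lia|lia|left; apply/eqP].
- apply/eqP/orP => [H3|[] /eqP]; [|lia|lia]. right; apply/eqP; lia.
Qed.

Lemma mrg_mono n (i : 'I_n.+1) (k l : 'I_n.+2) : (k <= l)%N -> (mrg i k <= mrg i l)%N.
Proof. rewrite !mrg_val; case: ifP; case: ifP => /=; lia. Qed.

Lemma exists_or2 m (P Q : 'I_m -> bool) :
  [exists a, P a || Q a] = [exists a, P a] || [exists a, Q a].
Proof.
apply/existsP/orP => [[a /orP[H|H]]|[/existsP[a H]|/existsP[a H]]].
- by left; apply/existsP; exists a.
- by right; apply/existsP; exists a.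
- by exists a; rewrite H.
- by exists a; rewrite H orbT.
Qed.

Lemma exs_mrg m n i (s : 'I_m -> option 'I_n.+2) (x : cube m) j :
  [exists a, (omap (mrg i) (s a) == Some j) && x a] =
  [exists a, ((if s a is Some l then (if j == i then (l == inord i) else l == lift (inord i.+1) j) else false) && x a)
            || ((if s a is Some l then (if j == i then (l == inord i.+1) else false) else false) && x a)].
Proof.
apply: eq_existsb => a; case: (s a) => //= l.
rewrite (inj_eq (@Some_inj _)) mrg_eq; case: (j == i) => //=.
by rewrite andb_orl.
by rewrite orbF.
Qed.

Lemma boxmap_good m n f : @boxmap m n f -> goodf f.
Proof.
elim => {m n f}.
- move=> n; exists (fun _ => false), Some; split.
  + by move=> i j k l H [<-] [<-]; apply: ltnW.
  + move=> x k /=; apply/idP/existsP => [H|[i /andP[/eqP [->] //]]].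
    by exists k; rewrite eqxx.
- move=> m n i e f _ [c [s [Hm Hv]]].
  exists (fun j => if unlift i j is Some k then c k else e), (fun a => omap (lift i) (s a)); split.
  + move=> a b k l H; case Ea: (s a) => [ka|] //= [<-]; case Eb: (s b) => [kb|] //= [<-].
    by rewrite /= leq_bump2; apply: Hm Ea Eb.
  + move=> x j; rewrite ffunE; case: unliftP => [j' ->|->].
    * rewrite Hv; congr orb; apply: eq_existsb => a.
      by case: (s a) => [ka|] //=; rewrite !(inj_eq (@Some_inj _)) (inj_eq (@lift_inj _ i)).
    * case: existsP => [[a /andP[H _]]|]; last by rewrite orbF.
      by move: H; case: (s a) => //= ka; rewrite (inj_eq (@Some_inj _)) eq_sym (negbTE (neq_lift _ _)).
- move=> m n i f _ [c [s [Hm Hv]]].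
  exists (fun k => c (lift i k)), (fun a => obind (unlift i) (s a)); split.
  + move=> a b k l H; case Ea: (s a) => [ka|] //=; case Eb: (s b) => [kb|] //=.
    case: unliftP => //= ka' Eka [<-]; case: unliftP => //= kb' Ekb [<-].
    by rewrite -(leq_bump2 i); move: (Hm _ _ _ _ H Ea Eb); rewrite Eka Ekb.
  + move=> x k; rewrite ffunE Hv; congr orb; apply: eq_existsb => a.
    case: (s a) => [l|] //=; case: unliftP => [l' ->|->].
    * by rewrite !(inj_eq (@Some_inj _)) (inj_eq (@lift_inj _ i)).
    * by rewrite (inj_eq (@Some_inj _)) (negbTE (neq_lift _ _)).
- move=> m n i f _ [c [s [Hm Hv]]].
  exists (fun j => if j == i then c (inord i) || c (inord i.+1) else c (lift (inord i.+1) j)),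
    (fun a => omap (mrg i) (s a)); split.
  + move=> a b k l H; case Ea: (s a) => [ka|] //= [<-]; case Eb: (s b) => [kb|] //= [<-].
    by apply: mrg_mono; apply: Hm Ea Eb.
  + move=> x j; rewrite ffunE exs_mrg; case Hj: (j == i) => /=.
    * rewrite !Hv exists_or2.
      have H: forall l, [exists a, (s a == Some l) && x a] = [exists a, (if s a is Some l' then l' == l else false) && x a].
        by move=> l; apply: eq_existsb => a; case: (s a).
      by rewrite !H orbACA.
    * rewrite Hv; congr orb; apply: eq_existsb => a.
      by case: (s a) => //= l; rewrite orbF.
Qed.


Definition flips n (e : edge n) : seq 'I_n := [seq k <- enum 'I_n | esrc e k != etgt e k].
Definition Phi n (p : seq (edge n)) : seq 'I_n := flatten (map (@flips n) p).
Definition setb n (u : cube n) (k : 'I_n) : cube n := [ffun j => (j == k) || u j].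
Definition edgeof n (u : cube n) (k : 'I_n) : edge n :=
  fun x => [ffun j => if j == k then x ord0 else u j].

Lemma cube1 (x : cube 1) : x = if x ord0 then [ffun => true] else [ffun => false].
Proof. by apply/ffunP => j; rewrite (ord1 j); case: (x ord0); rewrite ffunE. Qed.

Lemma edge_ext n (e : edge n) : e = fun x => if x ord0 then etgt e else esrc e.
Proof. apply: functional_extensionality => x; rewrite {1}(cube1 x); by case: (x ord0). Qed.

Lemma filter_enum1 n (P : pred 'I_n) k : P =1 pred1 k -> [seq j <- enum 'I_n | P j] = [:: k].
Proof. by move=> H; rewrite (eq_filter H) filter_pred1_uniq ?enum_uniq ?mem_enum. Qed.

Lemma filter_enum0 n (P : pred 'I_n) : P =1 pred0 -> [seq j <- enum 'I_n | P j] = [::].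
Proof. by move=> H; rewrite (eq_filter H) filter_pred0. Qed.

Lemma ex1 (P : pred 'I_1) : [exists i, P i] = P ord0.
Proof. by apply/existsP/idP => [[i]|H]; [rewrite (ord1 i)|exists ord0]. Qed.

Lemma ord2 (i : 'I_2) : i = ord0 \/ i = ord_max.
Proof. case: i => [[|[|//]]] H; [left|right]; exact: val_inj. Qed.

Lemma ex2 (P : pred 'I_2) : [exists i, P i] = P ord0 || P ord_max.
Proof.
apply/existsP/orP => [[i]|[H|H]]; last 2 first.
- by exists ord0. - by exists ord_max.
by case: (ord2 i) => ->; [left|right].
Qed.

Lemma edge_shape n (e : edge n) : boxmap e ->
  etgt e = esrc e \/ (exists k, esrc e k = false /\ etgt e = setb (esrc e) k).
Proof.
move/boxmap_good => [c [s [_ Hv]]].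
have Hs : forall j, esrc e j = c j by move=> j; rewrite /esrc Hv ex1 ffunE andbF orbF.
have Ht : forall j, etgt e j = c j || (s ord0 == Some j) by move=> j; rewrite /etgt Hv ex1 ffunE andbT.
case E: (s ord0) => [k|]; last first.
  by left; apply/ffunP => j; rewrite Ht Hs E orbF.
case Ck: (c k).
  left; apply/ffunP => j; rewrite Ht Hs E (inj_eq (@Some_inj _)).
  by case: (eqVneq k j) => [<-|_]; rewrite ?Ck ?orbF.
right; exists k; split; first by rewrite Hs.
by apply/ffunP => j; rewrite Ht ffunE Hs E (inj_eq (@Some_inj _)) eq_sym orbC.
Qed.

Lemma flips_const n (e : edge n) : etgt e = esrc e -> flips e = [::].
Proof. by move=> H; apply: filter_enum0 => j; rewrite /= H eqxx. Qed.

Lemma flips_one n (e : edge n) k : esrc e k = false -> etgt e = setb (esrc e) k -> flips e = [:: k].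
Proof.
move=> H1 H2; apply: filter_enum1 => j /=; rewrite H2 ffunE.
by case: (eqVneq j k) => [->|]; rewrite ?H1 //= eqxx.
Qed.

Lemma edge_const n (e : edge n) : etgt e = esrc e -> e = fun _ => esrc e.
Proof. move=> H; rewrite {1}(edge_ext e) H; apply: functional_extensionality => x; by case: ifP. Qed.

Lemma edge_one n (e : edge n) k : esrc e k = false -> etgt e = setb (esrc e) k -> e = edgeof (esrc e) k.
Proof.
move=> H1 H2; rewrite {1}(edge_ext e) H2; apply: functional_extensionality => x.
apply/ffunP => j; rewrite /edgeof /setb; case: (x ord0); rewrite !ffunE; case: (eqVneq j k) => [->|] //=; by rewrite H1.
Qed.

Lemma esrc_edgeof n (u : cube n) k : u k = false -> esrc (edgeof u k) = u.
Proof. by move=> H; apply/ffunP => j; rewrite /esrc !ffunE; case: (eqVneq j k) => [->|]. Qed.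

Lemma etgt_edgeof n (u : cube n) k : etgt (edgeof u k) = setb u k.
Proof. by apply/ffunP => j; rewrite /etgt !ffunE; case: (eqVneq j k). Qed.

Lemma face0_0 e (z : cube 1) : face ord0 e z ord0 = e.
Proof. by rewrite ffunE unlift_none. Qed.
Lemma face0_1 e (z : cube 1) : face ord0 e z ord_max = z ord0.
Proof.
rewrite ffunE; case: unliftP => [j _|H] /=; first by rewrite (ord1 j).
by move/(congr1 val): H.
Qed.
Lemma face1_1 e (z : cube 1) : face ord_max e z ord_max = e.
Proof. by rewrite ffunE unlift_none. Qed.
Lemma face1_0 e (z : cube 1) : face ord_max e z ord0 = z ord0.
Proof.
rewrite ffunE; case: unliftP => [j _|H] /=; first by rewrite (ord1 j).
by move/(congr1 val): H.
Qed.


Lemma flt n (o : option 'I_n) :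
  [seq k <- enum 'I_n | o == Some k] = if o is Some k then [:: k] else [::].
Proof.
case: o => [k|]; [apply: filter_enum1 => j /= | apply: filter_enum0 => j //=].
by rewrite (inj_eq (@Some_inj _)) eq_sym.
Qed.

Lemma flt2 n (a b : option 'I_n) :
  [seq k <- enum 'I_n | (a == Some k) && (b != Some k)] =
  if a is Some k then (if b == Some k then [::] else [:: k]) else [::].
Proof.
case: a => [k|]; last by apply: filter_enum0 => j /=.
case: b => [l|]; last by apply: filter_enum1 => j /=; rewrite andbT (inj_eq (@Some_inj _)) eq_sym.
rewrite (inj_eq (@Some_inj _)); case: (eqVneq l k) => [->|ne].
  by apply: filter_enum0 => j /=; rewrite !(inj_eq (@Some_inj _)); case: (k == j).
apply: filter_enum1 => j /=; rewrite !(inj_eq (@Some_inj _)).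
by case: (eqVneq j k) => [->|]; rewrite ?eqxx ?(negbTE ne) // eq_sym => /negbTE ->.
Qed.

Lemma sq_shape n (sq : cube 2 -> cube n) : boxmap sq ->
  let E1 : edge n := fun x => sq (face ord0 false x) in
  let E2 : edge n := fun x => sq (face ord_max true x) in
  let E3 : edge n := fun x => sq (face ord_max false x) in
  let E4 : edge n := fun x => sq (face ord0 true x) in
  flips E1 ++ flips E2 = flips E3 ++ flips E4 \/
  exists x y : 'I_n, (y < x)%N /\ flips E1 ++ flips E2 = [:: x; y] /\ flips E3 ++ flips E4 = [:: y; x].
Proof.
move/boxmap_good => [c [s [Hm Hv]]] E1 E2 E3 E4.
have Hv2 : forall z k, sq z k = c k || (s ord0 == Some k) && z ord0 || (s ord_max == Some k) && z ord_max.
  by move=> z k; rewrite Hv ex2 orbA.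
pose o i := if s i is Some k then (if c k then None else Some k) else None.
have Ho : forall i k, (o i == Some k) = ~~ c k && (s i == Some k).
  move=> i k; rewrite /o; case: (s i) => [l|]; last by rewrite andbF; apply/eqP.
  rewrite (inj_eq (@Some_inj _)); case: (eqVneq l k) => [->|ne].
    by case: (c k); rewrite //= eqxx.
  rewrite andbF; case: (c l); first by apply/eqP.
  by rewrite (inj_eq (@Some_inj _)) (negbTE ne).
have F1 : flips E1 = [seq k <- enum 'I_n | o ord_max == Some k].
  apply: eq_filter => k; rewrite /= Ho !Hv2 ?face0_0 ?face0_1 !ffunE.
  by case: (c k); case: (s ord0 == Some k); case: (s ord_max == Some k).
have F2 : flips E2 = [seq k <- enum 'I_n | (o ord0 == Some k) && (o ord_max != Some k)].
  apply: eq_filter => k; rewrite /= !Ho !Hv2 ?face0_0 ?face0_1 ?face1_0 ?face1_1 !ffunE.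
  by case: (c k); case: (s ord0 == Some k); case: (s ord_max == Some k).
have F3 : flips E3 = [seq k <- enum 'I_n | o ord0 == Some k].
  apply: eq_filter => k; rewrite /= Ho !Hv2 ?face1_0 ?face1_1 !ffunE.
  by case: (c k); case: (s ord0 == Some k); case: (s ord_max == Some k).
have F4 : flips E4 = [seq k <- enum 'I_n | (o ord_max == Some k) && (o ord0 != Some k)].
  apply: eq_filter => k; rewrite /= !Ho !Hv2 ?face0_0 ?face0_1 ?face1_0 ?face1_1 !ffunE.
  by case: (c k); case: (s ord0 == Some k); case: (s ord_max == Some k).
have Hmon : forall k0 k1, o ord0 = Some k0 -> o ord_max = Some k1 -> (k0 <= k1)%N.
  move=> k0 k1; rewrite /o.
  case E0: (s ord0) => [l0|] //; case: (c l0) => // [[<-]].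
  case E1': (s ord_max) => [l1|] //; case: (c l1) => // [[<-]].
  by apply: (Hm ord0 ord_max) E0 E1'.
rewrite F1 F2 F3 F4 !flt !flt2.
move: Hmon; case: (o ord0) => [k0|]; case: (o ord_max) => [k1|] => Hmon /=.
- rewrite !(inj_eq (@Some_inj _)); case: (eqVneq k1 k0) => [->|ne]; first by left.
  right; exists k1, k0; split => //.
  by rewrite ltn_neqAle (Hmon k0 k1 erefl erefl) andbT eq_sym.
- by left.
- by left.
- by left.
Qed.


Lemma peel m n (f : cube m -> cube n.+1) (j : 'I_n.+1) c :
  (forall x, f x j = c) -> boxmap (fun x => degen j (f x)) -> boxmap f.
Proof.
move=> H Hb; have ->: f = fun x => face j c (degen j (f x)).
  apply: functional_extensionality => x; apply/ffunP => l; rewrite !ffunE.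
  by case: unliftP => [l' ->|->]; rewrite ?ffunE ?H.
exact: bm_face.
Qed.

Lemma edgeof_boxmap n : forall (u : cube n.+1) k, boxmap (edgeof u k).
Proof.
elim: n => [|n IH] u k.
  have ->: edgeof u k = fun x => x.
    apply: functional_extensionality => x; apply/ffunP => j.
    by rewrite ffunE (ord1 j) (ord1 k) eqxx.
  exact: bm_id.
have [j _ Hj]: exists2 j, j \in [set: 'I_n.+2] & j \notin [set k].
  apply/subsetPn; apply/negP => /subset_leq_card; by rewrite cardsT card_ord cards1.
move: Hj; rewrite in_set1 => Hj.
apply: (@peel _ _ _ j (u j)); first by move=> x; rewrite ffunE (negbTE Hj).
case: (unliftP j k) => [k' Ek|Ek]; last by rewrite Ek eqxx in Hj.
have ->: (fun x => degen j (edgeof u k x)) = edgeof (degen j u) k'.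
  apply: functional_extensionality => x; apply/ffunP => l.
  by rewrite !ffunE Ek (inj_eq (@lift_inj _ j)).
exact: IH.
Qed.

Definition sqof n (u : cube n) (y x : 'I_n) : cube 2 -> cube n :=
  fun z => [ffun j => if j == x then z ord_max else if j == y then z ord0 else u j].

Lemma sqof_boxmap n : forall (u : cube n.+2) (y x : 'I_n.+2), (y < x)%N -> boxmap (sqof u y x).
Proof.
elim: n => [|n IH] u y x Hyx.
  have [Ey Ex]: y = ord0 /\ x = ord_max.
    by case: (ord2 y) Hyx => ->; case: (ord2 x) => ->.
  subst y x.
  have ->: sqof u ord0 ord_max = fun x => x.
    apply: functional_extensionality => z; apply/ffunP => j.
    by rewrite ffunE; case: (ord2 j) => ->.
  exact: bm_id.
have [j _ Hj]: exists2 j, j \in [set: 'I_n.+3] & j \notin [set y; x].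
  apply/subsetPn; apply/negP => /subset_leq_card; rewrite cardsT card_ord cards2.
  by case: (y != x).
move: Hj; rewrite !inE negb_or => /andP[Hjy Hjx].
apply: (@peel _ _ _ j (u j)); first by move=> z; rewrite ffunE (negbTE Hjy) (negbTE Hjx).
case: (unliftP j y) => [y' Ey|Ey]; last by rewrite Ey eqxx in Hjy.
case: (unliftP j x) => [x' Ex|Ex]; last by rewrite Ex eqxx in Hjx.
have ->: (fun z => degen j (sqof u y x z)) = sqof (degen j u) y' x'.
  apply: functional_extensionality => z; apply/ffunP => l.
  by rewrite !ffunE Ey Ex !(inj_eq (@lift_inj _ j)).
apply: IH; move: Hyx; rewrite Ey Ex /= !ltnNge.
by rewrite leq_bump2.
Qed.


Lemma edgeof_bm n (u : cube n) k : boxmap (edgeof u k).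
Proof. case: n u k => [|n] u k; [by case: k | exact: edgeof_boxmap]. Qed.

Lemma sqof_bm n (u : cube n) (y x : 'I_n) : (y < x)%N -> boxmap (sqof u y x).
Proof.
case: n u y x => [|[|n]] u y x H; [by case: y H | | exact: sqof_boxmap].
by move: H; rewrite (ord1 x) (ord1 y).
Qed.

Fixpoint canon n (u : cube n) (s : seq 'I_n) : seq (edge n) :=
  if s is k :: s' then edgeof u k :: canon (setb u k) s' else [::].

Lemma size_canon n (u : cube n) s : size (canon u s) = size s.
Proof. by elim: s u => //= k s IH u; rewrite IH. Qed.

Lemma canon_cat n (u : cube n) s1 s2 :
  canon u (s1 ++ s2) = canon u s1 ++ canon (foldl (@setb n) u s1) s2.
Proof. by elim: s1 u => //= k s IH u; rewrite IH. Qed.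

Lemma foldl_setb n (u : cube n) s : foldl (@setb n) u s = [ffun j => u j || (j \in s)].
Proof.
elim: s u => [|k s IH] u /=; first by apply/ffunP => j; rewrite ffunE orbF.
rewrite IH; apply/ffunP => j; rewrite !ffunE in_cons.
by case: (j == k); rewrite ?orbT.
Qed.

Lemma Phi_cat n (p q : seq (edge n)) : Phi (p ++ q) = Phi p ++ Phi q.
Proof. by rewrite /Phi map_cat flatten_cat. Qed.

Lemma Phi_cons n (e : edge n) p : Phi (e :: p) = flips e ++ Phi p.
Proof. by []. Qed.

Lemma cpath_props n (u v : cube n) p : is_cpath u p v ->
  (forall k, k \in Phi p -> u k = false) /\ uniq (Phi p) /\ v = [ffun j => u j || (j \in Phi p)].
Proof.
elim: p u => [|e p IH] u /=.
  by move=> ->; split => //; split => //; apply/ffunP => j; rewrite ffunE orbF.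
move=> [Hb [Hs Hp]]; have [H1 [H2 H3]] := IH _ Hp.
case: (edge_shape Hb) => [Hc|[k [Hk Ht]]].
  rewrite Phi_cons flips_const // cat0s; rewrite Hc Hs in H1 H3; by [].
rewrite Phi_cons (flips_one Hk Ht) cat1s; rewrite Hs in Hk Ht; rewrite Ht in H1 H3.
split; last split.
- move=> j; rewrite in_cons => /orP[/eqP ->|/H1] //; rewrite ffunE => /norP[_ /negbTE] //.
- rewrite cons_uniq H2 andbT; apply/negP => /H1; by rewrite ffunE eqxx.
- rewrite H3; apply/ffunP => j; rewrite !ffunE in_cons.
  by case: (j == k); rewrite ?orbT.
Qed.

Lemma canon_props n (u : cube n) s : (forall k, k \in s -> u k = false) -> uniq s ->
  is_cpath u (canon u s) (foldl (@setb n) u s) /\ Phi (canon u s) = s.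
Proof.
elim: s u => [|k s IH] u //= Hf /andP[Hks Hu].
have Huk : u k = false by apply: Hf; rewrite in_cons eqxx.
have Hf' : forall j, j \in s -> setb u k j = false.
  move=> j Hj; rewrite ffunE Hf ?in_cons ?Hj ?orbT // orbF.
  by apply/eqP => E; move: Hks; rewrite -E Hj.
have [IH1 IH2] := IH (setb u k) Hf' Hu.
have Hs : esrc (edgeof u k) = u by apply: esrc_edgeof.
split; last by rewrite Phi_cons IH2 (flips_one (k:=k)) ?Hs ?etgt_edgeof.
split; first exact: edgeof_bm.
split => //; by rewrite etgt_edgeof.
Qed.


Lemma reparam_Phi n (u : cube n) h q : count id h = size q -> Phi (reparam u h q) = Phi q.
Proof.
elim: h u q => [|[] h IH] u q /=.
- by case: q.
- case: q => [|e q] //= [H]; by rewrite !Phi_cons IH.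
- move=> H; by rewrite Phi_cons flips_const // cat0s IH.
Qed.

Lemma norm_reparam n (u v : cube n) p : is_cpath u p v ->
  p = reparam u [seq flips e != [::] | e <- p] (canon u (Phi p)) /\
  count id [seq flips e != [::] | e <- p] = size (Phi p).
Proof.
elim: p u => [|e p IH] u //= [Hb [Hs Hp]]; have [IH1 IH2] := IH _ Hp.
case: (edge_shape Hb) => [Hc|[k [Hk Ht]]].
  rewrite Phi_cons (flips_const Hc) /=; split => //.
  rewrite Hc Hs in IH1; rewrite -IH1; congr cons.
  by rewrite (edge_const Hc) Hs.
have He := edge_one Hk Ht.
rewrite Phi_cons (flips_one Hk Ht) /=; split; last by rewrite IH2.
rewrite Hs in He Ht; rewrite etgt_edgeof -Ht -IH1; by rewrite {1}He.
Qed.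

Section Rel.
Variables (n : nat) (a b : {set 'I_n}).

Lemma canon_equiv p : is_cpath (vset a) p (vset b) ->
  reparam_rel a b p (canon (vset a) (Phi p)).
Proof.
move=> Hp; have [H1 [H2 H3]] := cpath_props Hp.
have [N1 N2] := norm_reparam Hp.
have [C1 C2] := canon_props H1 H2.
split => //; split; first by rewrite H3 -foldl_setb.
by exists [seq flips e != [::] | e <- p]; rewrite size_canon.
Qed.

Lemma equiv_Phi p q : path_equiv a b p q -> Phi p = Phi q.
Proof.
elim => // [x y [_ [_ [h [Hc ->]]]]|x y z _ -> _ ->] //.
by rewrite reparam_Phi.
Qed.

Lemma Phi_equiv p q : is_cpath (vset a) p (vset b) -> is_cpath (vset a) q (vset b) ->
  Phi p = Phi q -> path_equiv a b p q.
Proof.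
move=> Hp Hq E; apply: rst_trans (rst_step _ _ _ _ (canon_equiv Hp)) _.
by rewrite E; apply: rst_sym; apply: rst_step; apply: canon_equiv.
Qed.

Lemma cpath_sigma p : is_cpath (vset a) p (vset b) -> sigma (b :\: a) (Phi p).
Proof.
move=> Hp; have [H1 [H2 H3]] := cpath_props Hp.
split => //; apply/setP => j; rewrite !inE.
move/ffunP: H3 => /(_ j); rewrite !ffunE => ->.
case Hj: (j \in Phi p); last by rewrite orbF andNb.
by have := H1 _ Hj; rewrite ffunE => ->.
Qed.

Lemma sigma_props s : a \subset b -> sigma (b :\: a) s ->
  (forall k, k \in s -> vset a k = false) /\ uniq s /\ foldl (@setb n) (vset a) s = vset b.
Proof.
move=> Hab [Hu Hs]; have Hin : forall j, (j \in s) = (j \in b :\: a).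
  by move=> j; rewrite -Hs inE.
split; last split => //.
  by move=> k; rewrite Hin ffunE inE => /andP[/negbTE].
rewrite foldl_setb; apply/ffunP => j; rewrite !ffunE Hin inE.
case Ha: (j \in a) => //=; by rewrite (subsetP Hab).
Qed.

Lemma canon_sigma s : a \subset b -> sigma (b :\: a) s ->
  is_cpath (vset a) (canon (vset a) s) (vset b) /\ Phi (canon (vset a) s) = s.
Proof.
move=> Hab Hs; have [H1 [H2 H3]] := sigma_props Hab Hs.
by rewrite -H3; apply: canon_props.
Qed.

End Rel.


Fixpoint inv n (s : seq 'I_n) : nat :=
  if s is x :: s' then count (fun y : 'I_n => (y < x)%N) s' + inv s' else 0.

Lemma inv_step n (s t : seq 'I_n) : bruhat_step s t -> inv s = (inv t).+1.
Proof.
move=> [s1 [s2 [x [y [Hyx [-> ->]]]]]].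
elim: s1 => [|z s1 IH] /=.
  have Hxy : (x < y)%N = false by rewrite ltnNge ltnW.
  rewrite Hyx Hxy; lia.
rewrite IH !count_cat /=; lia.
Qed.

Lemma bruhat_inv n (s t : seq 'I_n) : bruhat s t -> s = t \/ (inv t < inv s)%N.
Proof.
elim => {s t} [s t /inv_step ->|s|s t u _ IH1 _ IH2]; auto.
case: IH1 => [E1|H1]; case: IH2 => [E2|H2].
- by left; rewrite E1 E2.
- by right; rewrite E1.
- by right; rewrite -E2.
- right; exact: ltn_trans H2 H1.
Qed.

Lemma bruhat_antisym n (s t : seq 'I_n) : bruhat s t -> bruhat t s -> s = t.
Proof.
move=> /bruhat_inv [//|H1] /bruhat_inv [E|H2]; first by [].
by have := ltn_trans H1 H2; rewrite ltnn.
Qed.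

Lemma step_sigma n (A : {set 'I_n}) s t : bruhat_step s t -> sigma A s -> sigma A t.
Proof.
move=> [s1 [s2 [x [y [_ [-> ->]]]]]] [Hu Hs].
have P : perm_eq (s1 ++ x :: y :: s2) (s1 ++ y :: x :: s2).
  by rewrite perm_cat2l -[x :: y :: s2]/([:: x] ++ [:: y] ++ s2) perm_catCA.
split; first by rewrite -(perm_uniq P).
by rewrite -Hs; apply/setP => j; rewrite !inE (perm_mem P).
Qed.

Ltac xy j x y := let E1 := fresh in let E2 := fresh in
  case E1: (j == x); [move/eqP: E1 => E1; subst j; rewrite ?eqxx | case E2: (j == y); [move/eqP: E2 => E2; subst j; rewrite ?eqxx|]].

Section Leads.
Variables (n : nat) (a b : {set 'I_n}).

Lemma leads_bruhat p q : leads a b p q -> bruhat (Phi p) (Phi q).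
Proof.
elim => {p q} [p q [/equiv_Phi ->|[p0 [q0 [/equiv_Phi E1 [H /equiv_Phi E2]]]]]|p|p q r _ H1 _ H2].
- exact: rt_refl.
- rewrite E1 -E2.
  move: H => [pre [post [sq [u [w [_ [Hb [_ [_ [_ [-> ->]]]]]]]]]]].
  rewrite !Phi_cat /=.
  case: (sq_shape Hb) => /= [E|[x [y [Hyx [Ep Eq]]]]].
    rewrite !Phi_cons /= !cats0 in E *. by rewrite E; apply: rt_refl.
  rewrite !Phi_cons /= !cats0 in Ep Eq *.
  rewrite Ep Eq; apply: rt_step; by exists (Phi pre), (Phi post), x, y.
- exact: rt_refl.
- exact: rt_trans H1 H2.
Qed.

Lemma step_elem s t : a \subset b -> sigma (b :\: a) s -> bruhat_step s t ->
  elem_step a b (canon (vset a) s) (canon (vset a) t).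
Proof.
move=> Hab Hs Hst; have [H1 [H2 H3]] := sigma_props Hab Hs.
move: Hst H1 H2 H3 => [s1 [s2 [x [y [Hyx [-> ->]]]]]] H1 H2 H3.
set u := vset a; set w := foldl (@setb n) u s1.
have Hw : forall j, w j = u j || (j \in s1) by move=> j; rewrite /w foldl_setb ffunE.
move: H2; rewrite cat_uniq /= => /and5P[U1 Hn Hx Hy2 U2].
move: Hn; rewrite !negb_or => /and3P[Hx1 Hy1 /hasPn Hhas].
move: Hx; rewrite in_cons negb_or => /andP[Hxy Hx2].
have Hux : u x = false by apply: H1; rewrite mem_cat !inE eqxx orbT.
have Huy : u y = false by apply: H1; rewrite mem_cat !inE eqxx !orbT.
have Hwx : w x = false by rewrite Hw Hux (negbTE Hx1).
have Hwy : w y = false by rewrite Hw Huy (negbTE Hy1).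
have Hxy' : (x == y) = false by apply/negbTE.
have Hyx' : (y == x) = false by rewrite eq_sym.
exists (canon u s1), (canon (setb (setb w x) y) s2), (sqof w y x), w, (setb (setb w x) y).
have C1 : is_cpath u (canon u s1) w.
  apply: (proj1 (canon_props _ _)) => // k Hk; apply: H1; by rewrite mem_cat Hk.
have Hfold : foldl (@setb n) (setb (setb w x) y) s2 = vset b.
  by rewrite -H3 foldl_cat.
have C2 : is_cpath (setb (setb w x) y) (canon (setb (setb w x) y) s2) (vset b).
  rewrite -Hfold; apply: (proj1 (canon_props _ _)) => // k Hk.
  rewrite !ffunE Hw H1 ?mem_cat ?Hk ?orbT ?inE //=.
  have -> : (k == y) = false by apply/negbTE; apply: contraNneq Hy2 => <-.
  have -> : (k == x) = false by apply/negbTE; apply: contraNneq Hx2 => <-.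
  by rewrite /= (negbTE (Hhas _ Hk)).
  by rewrite Hk !orbT.
have Swap : setb (setb w y) x = setb (setb w x) y.
  by apply/ffunP => j; rewrite !ffunE orbCA.
split => //; split; first exact: sqof_bm.
split.
  apply/ffunP => j; rewrite /sqof !ffunE.
  case: (eqVneq j x) => [->|]; first by rewrite Hwx.
  by case: (eqVneq j y) => [->|] //; rewrite Hwy.
split.
  apply/ffunP => j; rewrite /sqof !ffunE.
  by xy j x y; rewrite ?Hxy' ?Hyx' //=; rewrite ?orbT.
split => //.
split.
  rewrite canon_cat /= -/w; congr (_ ++ _ :: _ :: _).
  - apply: functional_extensionality => z; apply/ffunP => j.
    rewrite /edgeof /sqof face0_0 face0_1 !ffunE.
    by xy j x y; rewrite ?Hxy' ?Hyx' //=; rewrite ?Hwy.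
  - apply: functional_extensionality => z; apply/ffunP => j.
    rewrite /edgeof /sqof /setb face1_0 face1_1 !ffunE.
    by xy j x y; rewrite ?Hxy' ?Hyx' //=; rewrite ?Hxy' ?Hyx' ?eqxx.
rewrite canon_cat /= -/w Swap; congr (_ ++ _ :: _ :: _).
- apply: functional_extensionality => z; apply/ffunP => j.
  rewrite /edgeof /sqof face1_0 face1_1 !ffunE.
  by xy j x y; rewrite ?Hxy' ?Hyx' //=; rewrite ?Hwx ?Hxy'.
- apply: functional_extensionality => z; apply/ffunP => j.
  rewrite /edgeof /sqof /setb face0_0 face0_1 !ffunE.
  by xy j x y; rewrite ?Hxy' ?Hyx' //=; rewrite ?Hxy' ?Hyx' ?eqxx.
Qed.

End Leads.


Section BL.
Variables (n : nat) (a b : {set 'I_n}).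

Lemma bruhat_canon s t : a \subset b -> bruhat s t -> sigma (b :\: a) s ->
  sigma (b :\: a) t /\ leads a b (canon (vset a) s) (canon (vset a) t).
Proof.
move=> Hab; elim => {s t} [s t H Hs|s Hs|s t u _ IH1 _ IH2 Hs].
- split; first exact: step_sigma H Hs.
  apply: rt_step; right; exists (canon (vset a) s), (canon (vset a) t).
  split; first exact: rst_refl.
  split; first exact: step_elem.
  exact: rst_refl.
- by split => //; apply: rt_refl.
- have [Ht L1] := IH1 Hs; have [Hu L2] := IH2 Ht.
  by split => //; apply: rt_trans L1 L2.
Qed.

Lemma bruhat_leads p q : a \subset b ->
  is_cpath (vset a) p (vset b) -> is_cpath (vset a) q (vset b) ->
  bruhat (Phi p) (Phi q) -> leads a b p q.
Proof.
move=> Hab Hp Hq H.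
have [_ L] := bruhat_canon Hab H (cpath_sigma Hp).
apply: rt_trans; first by apply: rt_step; left; apply: rst_step; apply: canon_equiv Hp.
apply: rt_trans L _.
by apply: rt_step; left; apply: rst_sym; apply: rst_step; apply: canon_equiv Hq.
Qed.

End BL.

Theorem proposition2p14 (n : nat) :
  exists Phi : {set 'I_n} -> {set 'I_n} -> seq (edge n) -> seq 'I_n,
    (forall a b : {set 'I_n}, a \subset b ->
       (forall p, is_cpath (vset a) p (vset b) -> sigma (b :\: a) (Phi a b p)) /\
       (forall p q, is_cpath (vset a) p (vset b) -> is_cpath (vset a) q (vset b) ->
          (path_equiv a b p q <-> Phi a b p = Phi a b q)) /\
       (forall s, sigma (b :\: a) s ->
          exists p, is_cpath (vset a) p (vset b) /\ Phi a b p = s) /\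
       (forall p q, is_cpath (vset a) p (vset b) -> is_cpath (vset a) q (vset b) ->
          (leads a b p q <-> bruhat (Phi a b p) (Phi a b q))) /\
       (forall p q, is_cpath (vset a) p (vset b) -> is_cpath (vset a) q (vset b) ->
          leads a b p q -> leads a b q p -> path_equiv a b p q)) /\
    (forall a b c : {set 'I_n}, a \subset b -> b \subset c ->
       forall p q, is_cpath (vset a) p (vset b) -> is_cpath (vset b) q (vset c) ->
         Phi a c (p ++ q) = Phi a b p ++ Phi b c q).
Proof.
exists (fun _ _ p => Phi p); split.
- move=> a b Hab; split; first by move=> p; apply: cpath_sigma.
  split; first by move=> p q Hp Hq; split; [apply: equiv_Phi | apply: Phi_equiv].
  split.
    move=> s Hs; have [H1 H2] := canon_sigma Hab Hs.
    by exists (canon (vset a) s).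
  split; first by move=> p q Hp Hq; split; [apply: leads_bruhat | apply: bruhat_leads].
  move=> p q Hp Hq H1 H2; apply: Phi_equiv => //.
  exact: bruhat_antisym (leads_bruhat H1) (leads_bruhat H2).
- by move=> a b c _ _ p q _ _; apply: Phi_cat.
Qed.
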